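(* Let $\mathcal{G}=(V,E)$ be a hypergraph on $n$ vertices. Then for every nonempty $S\subset V$, $$(r(\mathcal{G})-1)\frac{\lambda_n(L_{\mathcal{G}})\,|S|\,|V\setminus S|}{n}\ \ge\ |\partial S|\ \ge\ \frac{cr(\mathcal{G})-1}{\lfloor r(\mathcal{G})^2/4\rfloor}\,\frac{\lambda_2(L_{\mathcal{G}})\,|S|\,|V\setminus S|}{n}.$$
   Context: A hypergraph $\mathcal{G}=(V,E)$ has a finite vertex set $V$ and a set $E$ of subsets of $V$ (edges), each of cardinality at least $2$. The rank $r(\mathcal{G})$ and co-rank $cr(\mathcal{G})$ are the maximum and minimum edge cardinalities. The degree $d_i$ is the number of edges containing $i$. The Laplacian $L_{\mathcal{G}}$ is the matrix with $(L_{\mathcal{G}})_{ii}=d_i$ and $(L_{\mathcal{G}})_{ij}=-\sum_{e\in E,\, i,j\in e}\frac{1}{|e|-1}$ for $i\ne j$; its eigenvalues are $\lambda_1(L_{\mathcal{G}})\le\dots\le\lambda_n(L_{\mathcal{G}})$. The edge boundary $\partial S$ is the set of edges containing a vertex of $S$ and a vertex of $V\setminus S$. *)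

(* Defs.v *)
From HB Require Import structures.
From mathcomp Require Import all_boot all_order all_algebra.
Set Implicit Arguments. Unset Strict Implicit. Unset Printing Implicit Defensive.
Import Order.TTheory GRing.Theory Num.Theory.
Local Open Scope ring_scope.

(* A hypergraph on vertex set 'I_n is given by its edge set E : {set {set 'I_n}};
   the hypothesis that every edge has cardinality >= 2 is stated in the theorem. *)

Definition hdeg (n : nat) (E : {set {set 'I_n}}) (i : 'I_n) : nat :=
  #|[set e in E | i \in e]|.

Definition hlaplacian (R : fieldType) (n : nat) (E : {set {set 'I_n}}) : 'M[R]_n :=
  \matrix_(i, j)
    if i == j then (hdeg E i)%:R
    else - \sum_(e in E | (i \in e) && (j \in e)) ((#|e|.-1)%:R)^-1.

Definition hrank (n : nat) (E : {set {set 'I_n}}) : nat := \max_(e in E) #|e|.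

(* co-rank cr(G) : minimum edge cardinality (default n irrelevant when E <> empty,
   since every edge has at most n elements) *)
Definition hcorank (n : nat) (E : {set {set 'I_n}}) : nat :=
  \big[minn/n]_(e in E) #|e|.

Definition hboundary (n : nat) (E : {set {set 'I_n}}) (S : {set 'I_n}) :=
  [set e in E | (e :&: S != set0) && (e :\: S != set0)].

(* s is the list of eigenvalues (with algebraic multiplicity) of A in
   nondecreasing order: lambda_k = s`_(k-1) *)
Definition sorted_eigenvalues (R : rcfType) (n : nat) (A : 'M[R]_n) (s : seq R) :=
  [/\ size s = n, sorted <=%R s & char_poly A = \prod_(x <- s) ('X - x%:P)].

(* Main.v *)
Require Import Defs.
From HB Require Import structures.
From mathcomp Require Import all_boot all_order all_algebra.
From mathcomp Require Import ring lra zify.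
From mathcomp.real_closed Require Import complex.
Import Order.TTheory GRing.Theory Num.Theory.
Local Open Scope ring_scope.

Lemma quad_gen (K : comRingType) (n : nat) (c a b : 'I_n -> K) :
  \sum_i \sum_j c i * c j * ((a i - a j) * (b i - b j)) =
  2 * ((\sum_i c i) * (\sum_i c i * a i * b i) - (\sum_i c i * a i) * (\sum_i c i * b i)).
Proof.
have E : forall i j, c i * c j * ((a i - a j) * (b i - b j)) =
  c i * c j * (a i * b i) + c i * c j * (a j * b j) - c i * c j * (a i * b j)
  - c i * c j * (a j * b i) by move=> *; ring.
under eq_bigr => i _ do under eq_bigr => j _ do rewrite E.
under eq_bigr => i _ do rewrite !sumrB big_split /=.
rewrite !sumrB big_split /=.
have e1 : \sum_i \sum_j c i * c j * (a i * b i) = (\sum_j c j) * \sum_i c i * a i * b i.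
  rewrite mulr_sumr; apply: eq_bigr => i _; rewrite mulr_suml; apply: eq_bigr => j _; ring.
have e2 : \sum_i \sum_j c i * c j * (a j * b j) = (\sum_j c j) * \sum_i c i * a i * b i.
  rewrite exchange_big mulr_sumr; apply: eq_bigr => i _; rewrite mulr_suml; apply: eq_bigr => j _; ring.
have e3 : \sum_i \sum_j c i * c j * (a i * b j) = (\sum_i c i * a i) * (\sum_i c i * b i).
  rewrite mulr_suml; apply: eq_bigr => i _; rewrite mulr_sumr; apply: eq_bigr => j _; ring.
have e4 : \sum_i \sum_j c i * c j * (a j * b i) = (\sum_i c i * a i) * (\sum_i c i * b i).
  rewrite exchange_big mulr_suml; apply: eq_bigr => i _; rewrite mulr_sumr; apply: eq_bigr => j _; ring.
rewrite e1 e2 e3 e4; ring.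
Qed.

Lemma quadA_gen (K : comRingType) (n : nat) (c a b : 'I_n -> K) (k : K) :
  (forall i, c i * c i = c i) ->
  \sum_i \sum_j a i * (c i * c j * ((i == j)%:R * k - 1)) * b j =
  k * (\sum_i c i * a i * b i) - (\sum_i c i * a i) * (\sum_i c i * b i).
Proof.
move=> hc.
have E : forall i j, a i * (c i * c j * ((i == j)%:R * k - 1)) * b j =
  (i == j)%:R * (k * (c i * a i * b j)) - (c i * a i) * (c j * b j).
  move=> i j; case: (eqVneq i j) => [<-|_] /=; last by ring.
  rewrite ?eqxx mul1r (_ : c i * a i * (c i * b i) = c i * c i * a i * b i); last by ring.
  rewrite hc; ring.
under eq_bigr => i _ do under eq_bigr => j _ do rewrite E.
have D : forall i, \sum_j (i == j)%:R * (k * (c i * a i * b j)) = k * (c i * a i * b i).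
  move=> i; rewrite (bigD1 i) //= big1 ?addr0 ?eqxx ?mul1r //.
  by move=> j hj; rewrite eq_sym (negbTE hj) mul0r.
under eq_bigr => i _ do rewrite sumrB D.
rewrite sumrB mulr_sumr mulr_suml; congr (_ - _).
by apply: eq_bigr => i _; rewrite mulr_sumr.
Qed.

Section Spec.
Local Open Scope sesquilinear_scope.
Variable C : numClosedFieldType.
Variable n : nat.
Variable A : 'M[C]_n.
Hypothesis Aherm : A^t* = A.

Let P := spectralmx A.
Let d := spectral_diag A.

Lemma A_normal : A \is normalmx.
Proof. by apply/normalmxP; rewrite Aherm. Qed.

Lemma PU : P \is unitarymx.
Proof. exact: spectral_unitarymx. Qed.

Lemma PPt : P *m P^t* = 1%:M.
Proof. exact/unitarymxP/PU. Qed.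

Lemma PtP : P^t* *m P = 1%:M.
Proof. exact/mulmx1C/PPt. Qed.

Lemma Adec : A = P^t* *m diag_mx d *m P.
Proof. by rewrite -invmx_unitary ?PU //; apply/orthomx_spectralP/A_normal. Qed.

Lemma quadE (v : 'rV[C]_n) :
  (v *m A *m v^t*) 0 0 = \sum_i d 0 i * ((v *m P^t*) 0 i * ((v *m P^t*) 0 i)^*).
Proof.
have -> : v *m A *m v^t* = (v *m P^t*) *m diag_mx d *m (v *m P^t*)^t*.
  by rewrite Adec !trmx_mul !map_mxM trmxCK !mulmxA.
rewrite mxE; apply: eq_bigr => i _; rewrite mul_mx_diag !mxE; ring.
Qed.

Lemma normE (v : 'rV[C]_n) :
  (v *m v^t*) 0 0 = \sum_i ((v *m P^t*) 0 i * ((v *m P^t*) 0 i)^*).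
Proof.
have -> : v *m v^t* = (v *m P^t*) *m (v *m P^t*)^t*.
  by rewrite !trmx_mul !map_mxM trmxCK !mulmxA -(mulmxA v) PtP mulmx1.
by rewrite mxE; apply: eq_bigr => i _; rewrite !mxE.
Qed.

Lemma charE : char_poly A = \prod_(i < n) ('X - (d 0 i)%:P).
Proof.
have := char_poly_trig (diag_mx_is_trig d).
under eq_bigr do rewrite mxE eqxx mulr1n.
move=> <-.
have eA : char_poly_mx A = map_mx polyC (P^t*) *m char_poly_mx (diag_mx d) *m map_mx polyC P.
  rewrite /char_poly_mx mulmxBr mulmxBl -!map_mxM -Adec; congr (_ - _).
  by rewrite mul_mx_scalar -scalemxAl -map_mxM PtP map_mx1 scalemx1.
rewrite /char_poly eA !det_mulmx mulrC mulrA -det_mulmx -map_mxM PPt map_mx1 det1 mul1r.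
done.
Qed.
Lemma dperm (t : seq C) : char_poly A = \prod_(x <- t) ('X - x%:P) ->
  perm_eq t [seq d 0 i | i <- enum 'I_n].
Proof.
move=> h; apply: prod_XsubC_eq; rewrite -h charE big_map big_enum /=.
done.
Qed.

Lemma quad_ub (M : C) (v : 'rV[C]_n) : (forall i, d 0 i <= M) ->
  (v *m A *m v^t*) 0 0 <= M * (v *m v^t*) 0 0.
Proof.
move=> hM; rewrite quadE normE mulr_sumr; apply: ler_sum => i _.
by apply: ler_wpM2r => //; apply: mul_conjC_ge0.
Qed.

Lemma quad_lb (m : C) (u v : 'rV[C]_n) : u != 0 -> u *m A = 0 ->
  v *m u^t* = 0 -> (forall w : 'rV[C]_n, 0 <= (w *m A *m w^t*) 0 0) ->
  (forall i j, i != j -> d 0 i < m -> m <= d 0 j) ->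
  (forall i, (d 0 i < m) || (m <= d 0 i)) ->
  m * (v *m v^t*) 0 0 <= (v *m A *m v^t*) 0 0.
Proof.
move=> hu huA hvu psd hd hcmp.
rewrite quadE normE mulr_sumr.
case: (pickP (fun i => d 0 i < m)) => [i0 hi0 | none]; last first.
  apply: ler_sum => i _; apply: ler_wpM2r; first exact: mul_conjC_ge0.
  by have := hcmp i; rewrite none.
have d0 : 0 <= d 0 i0.
  have := psd (row i0 P); rewrite quadE -row_mul PPt.
  rewrite (bigD1 i0) //= big1 ?addr0; last first.
    by move=> j hj; rewrite !mxE eq_sym (negbTE hj) conjC0 !mulr0.
  by rewrite !mxE eqxx conjC1 !mulr1.
have dpos : forall j, j != i0 -> 0 < d 0 j.
  move=> j hj; apply: (le_lt_trans d0); apply: (lt_le_trans hi0).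
  by apply: hd hi0; rewrite eq_sym.
set z := u *m P^t*.
have zD : z *m diag_mx d = 0.
  have : u *m A *m P^t* = 0 by rewrite huA mul0mx.
  by rewrite Adec !mulmxA -(mulmxA _ P) PPt mulmx1.
have zj : forall j, j != i0 -> z 0 j = 0.
  move=> j hj; have /matrixP /(_ 0 j) := zD; rewrite mul_mx_diag !mxE => /eqP.
  by rewrite mulf_eq0 (gt_eqF (dpos j hj)) orbF => /eqP.
have uE : u = z *m P by rewrite /z -mulmxA PtP mulmx1.
clearbody z.
have zi0 : z 0 i0 != 0.
  apply: contra hu => /eqP h0; rewrite uE.
  suff -> : z = 0 by rewrite mul0mx.
  apply/rowP => j; rewrite [RHS]mxE.
  by case: (eqVneq j i0) => [->|hj]; [rewrite h0 | rewrite zj].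
set y := v *m P^t*.
have yi0 : y 0 i0 = 0.
  have : (v *m u^t*) 0 0 = 0 by rewrite hvu mxE.
  rewrite uE trmx_mul map_mxM mulmxA -/y mxE (bigD1 i0) //= big1 ?addr0; last first.
    by move=> j hj; rewrite !mxE zj // conjC0 mulr0.
  by rewrite !mxE => /eqP; rewrite mulf_eq0 conjC_eq0 (negbTE zi0) orbF => /eqP.
apply: ler_sum => i _; case: (eqVneq i i0) => [->|hi].
  by rewrite yi0 !mul0r !mulr0.
apply: ler_wpM2r; first exact: mul_conjC_ge0.
by apply: hd hi0; rewrite eq_sym.
Qed.

End Spec.

Section Hyp.
Local Open Scope sesquilinear_scope.
Variable R : rcfType.
Variable n : nat.
Variable E : {set {set 'I_n}}.
Hypothesis hE : forall e, e \in E -> (2 <= #|e|)%N.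

Local Notation toC := (real_complex R).
Definition w (e : {set 'I_n}) : R := ((#|e|.-1)%:R)^-1.
Definition ind (e : {set 'I_n}) (i : 'I_n) : R := (i \in e)%:R.

Lemma w_k e : e \in E -> w e * (#|e|%:R - 1) = 1.
Proof.
move=> he; have h2 := hE e he.
rewrite /w -[in #|e|%:R](prednK (ltnW h2)) -natr1 addrK mulVf //.
by rewrite pnatr_eq0 -lt0n -ltnS prednK // (ltnW h2).
Qed.

Lemma Lij i j : hlaplacian R E i j =
  \sum_(e in E) w e * (ind e i * ind e j * ((i == j)%:R * #|e|%:R - 1)).
Proof.
rewrite /hlaplacian mxE; case: (eqVneq i j) => [<-|hij].
  rewrite /hdeg -sumr_const (eq_bigl (fun e => (e \in E) && (i \in e))); last first.
    by move=> e; rewrite inE.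
  rewrite big_mkcondr /=; apply: eq_bigr => e he; rewrite /ind.
  by case: (i \in e) => /=; rewrite ?mul1r ?w_k // !mul0r mulr0.
rewrite big_mkcondr /= -sumrN; apply: eq_bigr => e he; rewrite /ind.
by case: (i \in e); case: (j \in e) => /=; rewrite ?mul1r ?mul0r ?sub0r ?mulrN1 ?mulr0 ?oppr0.
Qed.
Definition Amx : 'M[R[i]]_n := map_mx toC (hlaplacian R E).
Definition cC (e : {set 'I_n}) (i : 'I_n) : R[i] := toC (ind e i).

Lemma cC2 e i : cC e i * cC e i = cC e i.
Proof. by rewrite /cC /ind; case: (i \in e); rewrite /= ?mulr1 ?mulr0 ?rmorph0 ?rmorph1. Qed.

Lemma sum_ind e : \sum_i ind e i = #|e|%:R.
Proof.
rewrite /ind -sumr_const [RHS]big_mkcond /=; apply: eq_bigr => i _.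
by case: (i \in e).
Qed.

Lemma sum_cC e : \sum_i cC e i = #|e|%:R.
Proof. by rewrite /cC -rmorph_sum sum_ind rmorph_nat. Qed.

Lemma Aij i j : Amx i j =
  \sum_(e in E) toC (w e) * (cC e i * cC e j * ((i == j)%:R * #|e|%:R - 1)).
Proof.
rewrite /Amx mxE Lij rmorph_sum; apply: eq_bigr => e _.
by rewrite /cC !rmorphM rmorphB rmorph1 rmorphM !rmorph_nat.
Qed.

Lemma toC_real (x : R) : (toC x)^* = toC x.
Proof. by apply: conj_Creal; apply/complex_realP; exists x. Qed.

Lemma A_herm : Amx^t* = Amx.
Proof.
apply/matrixP => i j; rewrite !mxE toC_real; congr toC.
case: (eqVneq i j) => [->|hij] //.
by congr (- _); apply: eq_bigl => e; rewrite (andbC (j \in e)).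
Qed.

Lemma quadA (v : 'rV[R[i]]_n) : 2 * (v *m Amx *m v^t*) 0 0 =
  \sum_(e in E) toC (w e) * \sum_i \sum_j cC e i * cC e j *
     ((v 0 i - v 0 j) * ((v 0 i)^* - (v 0 j)^*)).
Proof.
have X : (v *m Amx *m v^t*) 0 0 = \sum_(e in E) toC (w e) *
    \sum_i \sum_j v 0 i * (cC e i * cC e j * ((i == j)%:R * #|e|%:R - 1)) * (v 0 j)^*.
  rewrite mxE.
  under eq_bigr => j _ do rewrite !mxE mulr_suml.
  rewrite exchange_big /=.
  under eq_bigr => i _ do under eq_bigr => j _ do rewrite Aij mulr_sumr mulr_suml.
  under eq_bigr => i _ do rewrite exchange_big /=.
  rewrite exchange_big /=; apply: eq_bigr => e _.
  rewrite mulr_sumr; apply: eq_bigr => i _; rewrite mulr_sumr; apply: eq_bigr => j _.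
  ring.
rewrite X mulr_sumr; apply: eq_bigr => e _.
rewrite (@quadA_gen _ _ (cC e) (fun i => v 0 i) (fun j => (v 0 j)^*) _ (cC2 e)).
rewrite quad_gen sum_cC; ring.
Qed.

Lemma psdA (v : 'rV[R[i]]_n) : 0 <= (v *m Amx *m v^t*) 0 0.
Proof.
have : 0 <= 2 * (v *m Amx *m v^t*) 0 0.
  rewrite quadA; apply: sumr_ge0 => e he; apply: mulr_ge0.
    by rewrite /w ler0c invr_ge0 ler0n.
  apply: sumr_ge0 => i _; apply: sumr_ge0 => j _; apply: mulr_ge0.
    by rewrite /cC /ind !rmorph_nat mulr_ge0 ?ler0n.
  rewrite -rmorphB; exact: mul_conjC_ge0.
by rewrite pmulr_rge0 // ltr0n.
Qed.

Lemma uA : (const_mx 1 : 'rV[R[i]]_n) *m Amx = 0.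
Proof.
apply/rowP => j; rewrite !mxE.
under eq_bigr => i _ do rewrite mxE mul1r Aij.
rewrite exchange_big /= big1 // => e he.
rewrite -mulr_sumr.
have -> : \sum_i cC e i * cC e j * ((i == j)%:R * #|e|%:R - 1) =
   \sum_i (i == j)%:R * (cC e i * cC e j * #|e|%:R) - \sum_i cC e i * cC e j.
  by rewrite -sumrB; apply: eq_bigr => i _; ring.
rewrite (bigD1 j) //= big1 ?addr0; last by move=> i /negbTE ->; rewrite mul0r.
by rewrite -mulr_suml sum_cC eqxx cC2 mul1r [_ * cC e j]mulrC subrr mulr0.
Qed.
Variable S : {set 'I_n}.
Hypothesis n_gt0 : (0 < n)%N.

Definition xS (i : 'I_n) : R := ind S i - #|S|%:R / n%:R.
Definition vS : 'rV[R[i]]_n := \row_i toC (xS i).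

Lemma nR0 : (n%:R : R) != 0.
Proof. by rewrite pnatr_eq0 -lt0n. Qed.

Lemma vS_u : vS *m (const_mx 1 : 'rV[R[i]]_n)^t* = 0.
Proof.
apply/rowP => k; rewrite !mxE ord1.
under eq_bigr => i _ do rewrite !mxE conjC1 mulr1.
rewrite -rmorph_sum /xS sumrB sum_ind sumr_const card_ord.
by rewrite -[_ / _ *+ n]mulr_natr divfK ?nR0 // subrr rmorph0.
Qed.

Lemma ind2 e i : ind e i * ind e i = ind e i.
Proof. by rewrite /ind; case: (i \in e); rewrite ?mulr1 ?mulr0. Qed.

Lemma vS_norm : (vS *m vS^t*) 0 0 = toC (#|S|%:R * #|~: S|%:R / n%:R).
Proof.
rewrite mxE.
under eq_bigr => i _ do rewrite !mxE toC_real -rmorphM.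
rewrite -rmorph_sum; congr toC.
have -> : \sum_i xS i * xS i = \sum_i (ind S i * (1 - 2 * (#|S|%:R / n%:R)))
   + \sum_(i < n) (#|S|%:R / n%:R) ^+ 2.
  rewrite -big_split /=; apply: eq_bigr => i _; rewrite /xS.
  rewrite (_ : (ind S i - #|S|%:R / n%:R) * (ind S i - #|S|%:R / n%:R) =
    ind S i * ind S i - 2 * ind S i * (#|S|%:R / n%:R) + (#|S|%:R / n%:R) ^+ 2); last by ring.
  rewrite ind2; ring.
rewrite -mulr_suml sum_ind sumr_const card_ord.
have hn : (n%:R : R) = #|S|%:R + #|~: S|%:R.
  by rewrite -natrD cardsC card_ord.
have nR := nR0.
rewrite -[_ ^+ 2 *+ n]mulr_natr hn; rewrite hn in nR; by field.
Qed.
Definition Qv : R := \sum_(e in E) w e * (#|e :&: S| * #|e :\: S|)%:R.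

Lemma cCI e i : cC e i * cC S i = cC (e :&: S) i.
Proof. by rewrite /cC -rmorphM /ind inE; case: (i \in e); case: (i \in S); rewrite ?mulr1 ?mulr0. Qed.

Lemma vS_quad : (vS *m Amx *m vS^t*) 0 0 = toC Qv.
Proof.
have h2 : (2 : R[i]) != 0 by rewrite pnatr_eq0.
apply: (mulfI h2); rewrite quadA /Qv rmorph_sum mulr_sumr; apply: eq_bigr => e he.
have -> : \sum_i \sum_j cC e i * cC e j * ((vS 0 i - vS 0 j) * ((vS 0 i)^* - (vS 0 j)^*))
   = \sum_i \sum_j cC e i * cC e j * ((cC S i - cC S j) * (cC S i - cC S j)).
  apply: eq_bigr => i _; apply: eq_bigr => j _; rewrite !mxE !toC_real /xS !rmorphB.
  rewrite /cC; congr (_ * (_ * _)); ring.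
rewrite quad_gen sum_cC.
under eq_bigr => i _ do rewrite -mulrA cC2 cCI.
rewrite sum_cC.
under eq_bigr => i _ do rewrite cCI.
rewrite sum_cC -(cardsID S e) rmorphM rmorph_nat !natrD !natrM; ring.
Qed.
Definition bnd e := (e :&: S != set0) && (e :\: S != set0).

Lemma card_bnd : (#|hboundary E S|%:R : R) = \sum_(e in E) (bnd e)%:R.
Proof.
rewrite -sumr_const /hboundary (eq_bigl (fun e => (e \in E) && bnd e)); last first.
  by move=> e; rewrite inE.
rewrite big_mkcondr /=; apply: eq_bigr => e _.
by case: (bnd e).
Qed.

Lemma kpos e : e \in E -> (0 : R) < (#|e|.-1)%:R.
Proof. by move=> he; rewrite ltr0n -ltnS prednK ?(hE e he) // ltnW ?(hE e he). Qed.

Lemma B1 : (#|hboundary E S|%:R : R) <= Qv.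
Proof.
rewrite card_bnd /Qv; apply: ler_sum => e he; rewrite /bnd /w.
case hb: ((e :&: S != set0) && (e :\: S != set0)) => /=.
  move/andP: hb => [ha hb']; rewrite -card_gt0 in ha; rewrite -card_gt0 in hb'.
  rewrite ler_pdivlMl ?kpos // mulr1 ler_nat -(cardsID S e).
  move: ha hb'; set a := #|_|; set b := #|_|; move=> ha hb'.
  by case: a ha => // a _; case: b hb' => // b _; rewrite addSn /= mulSn addnC leq_add2l leq_pmulr.
by rewrite mulr_ge0 // invr_ge0 ler0n.
Qed.

Lemma B2 (c F : nat) : (forall e, e \in E -> c <= #|e|)%N ->
  (forall e, e \in E -> #|e :&: S| * #|e :\: S| <= F)%N ->
  Qv * (c.-1)%:R <= #|hboundary E S|%:R * F%:R.
Proof.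
move=> hc hF.
rewrite card_bnd /Qv !mulr_suml; apply: ler_sum => e he; rewrite /bnd /w.
case hb: ((e :&: S != set0) && (e :\: S != set0)) => /=; last first.
  move/negbT: hb; rewrite negb_and !negbK => /orP [] /eqP ->; rewrite cards0 ?muln0 ?mul0n;
  by rewrite !mulr0 !mul0r.
rewrite mul1r -mulrA ler_pdivrMl ?kpos // -!natrM ler_nat.
rewrite mulnC; apply: leq_mul; last exact: hF.
by rewrite -!subn1 leq_sub2r // hc.
Qed.
End Hyp.

Lemma bigmin_le (I : eqType) (r : seq I) (P : pred I) (F : I -> nat) (d : nat) i :
  i \in r -> P i -> (\big[minn/d]_(j <- r | P j) F j <= F i)%N.
Proof.
elim: r => // x r IH; rewrite inE big_cons => /orP [/eqP <- | hi] hP.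
  by rewrite hP geq_minl.
case: (P x); last exact: IH.
by rewrite (leq_trans (geq_minr _ _)) // IH.
Qed.

Theorem theorem6 (R : rcfType) (n : nat) (E : {set {set 'I_n}})
    (hE : forall e, e \in E -> (2 <= #|e|)%N) (hEne : E != set0)
    (s : seq R) (hs : sorted_eigenvalues (hlaplacian R E) s)
    (S : {set 'I_n}) (hS : S != set0) :
  ((hrank E)%:R - 1) * (s`_(n.-1) * #|S|%:R * #|~: S|%:R / n%:R)
     >= (#|hboundary E S|%:R : R)
  /\ (#|hboundary E S|%:R : R)
     >= ((hcorank E)%:R - 1) / ((hrank E ^ 2) %/ 4)%:R
        * (s`_1 * #|S|%:R * #|~: S|%:R / n%:R).
Proof.
move: hs => [hsz hsort hchar].
have /set0Pn [e0 he0] := hEne.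
have h2e0 := hE e0 he0.
have n2 : (2 <= n)%N.
  by apply: (leq_trans h2e0); rewrite -[X in (_ <= X)%N](card_ord n) max_card.
have n_gt0 : (0 < n)%N by apply: leq_trans n2.
pose A := Amx R n E.
have herm := A_herm R n E.
have hcharC : char_poly A = \prod_(x <- map (real_complex R) s) ('X - x%:P).
  rewrite /A /Amx -map_char_poly hchar rmorph_prod big_map.
  by apply: eq_bigr => x _; rewrite rmorphB /= map_polyX map_polyC.
have hperm := dperm _ _ _ herm _ hcharC.
pose d := spectral_diag A.
have dmem : forall i, exists2 r, r \in s & d 0 i = (real_complex R) r.
  move=> i; have : d 0 i \in map (real_complex R) s.
    by rewrite (perm_mem hperm) map_f ?mem_enum.
  by case/mapP => r hr ->; exists r.
have hub : Qv R n E S <= s`_(n.-1) * (#|S|%:R * #|~: S|%:R / n%:R).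
  have := quad_ub _ _ _ herm ((real_complex R) (s`_(n.-1))) (vS R n S).
  rewrite vS_quad // vS_norm // -rmorphM lecR; apply => i.
  have [r hr ->] := dmem i; rewrite lecR.
  have -> : r = s`_(index r s) by rewrite nth_index.
  apply: (sorted_leq_nth le_trans lexx 0 hsort).
  - by rewrite unfold_in /= index_mem.
  - by rewrite unfold_in /= hsz prednK.
  - by rewrite -ltnS prednK // -hsz index_mem.
have hlb : s`_1 * (#|S|%:R * #|~: S|%:R / n%:R) <= Qv R n E S.
  pose u := (const_mx 1 : 'rV[R[i]]_n).
  have hu : u != 0.
    apply/eqP => /rowP /(_ (Ordinal n_gt0)); rewrite !mxE => /eqP; by rewrite oner_eq0.
  pose m := real_complex R s`_1.
  have hcmp : forall i, (d 0 i < m) || (m <= d 0 i).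
    by move=> i; have [r _ ->] := dmem i; rewrite ltcR lecR ltNge orNb.
  have c1 : (count (fun x : R => (x < s`_1)%R) s <= 1)%N.
    move: hsort n2; rewrite -hsz.
    case: (s) => [|a0 [|a1 rest]] //= /andP [_ hp] _.
    have hall := order_path_min le_trans hp.
    rewrite ltxx add0n (eq_in_count (a2 := pred0)) ?count_pred0 ?addn0 ?leq_b1 //.
    by move=> x hx /=; move/allP: hall => /(_ x hx) hx'; rewrite le_gtF.
  have hd : forall i j, i != j -> d 0 i < m -> m <= d 0 j.
    move=> i j hij hi; have := hcmp j; case/orP => // hj; exfalso.
    have c2 : leq 2 (count (fun x : R[i] => x < m) [seq d 0 k | k <- enum 'I_n]).
      rewrite count_map -size_filter.
      have -> : 2%N = size [:: i; j] by [].
      apply: uniq_leq_size; first by rewrite /= inE hij.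
      by move=> k; rewrite !inE => /orP [] /eqP ->; rewrite mem_filter /= mem_enum ?hi ?hj.
    move: c2; rewrite -(permP hperm) count_map.
    rewrite (eq_count (a2 := fun x => x < s`_1)); last by move=> x /=; rewrite ltcR.
    by rewrite leqNgt ltnS c1.
  have := quad_lb _ _ _ herm m u (vS R n S) hu (uA R n E hE) (vS_u R n S n_gt0) (psdA R n E hE) hd hcmp.
  by rewrite vS_norm // vS_quad // -rmorphM lecR.
have hb1 := B1 R n E hE S.
have rk2 : (2 <= hrank E)%N by apply: (leq_trans h2e0); rewrite /hrank (leq_bigmax_cond e0 he0).
have hcr : forall e, e \in E -> (hcorank E <= #|e|)%N.
  by move=> e he; rewrite /hcorank; apply: bigmin_le; rewrite ?mem_index_enum.
have cr2 : (2 <= hcorank E)%N.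
  rewrite /hcorank; apply: (big_ind (fun m => 2 <= m)%N) => //.
    by move=> x y hx hy; rewrite leq_min hx hy.
have hF : forall e, e \in E -> (#|e :&: S| * #|e :\: S| <= hrank E ^ 2 %/ 4)%N.
  move=> e he; rewrite leq_divRL //.
  have hk : (#|e :&: S| + #|e :\: S| <= hrank E)%N by rewrite cardsID /hrank (leq_bigmax_cond e he).
  move: hk; set a := #|_|; set b := #|_|; set r := hrank E => hk.
  have h1 : ((a + b) * (a + b) <= r * r)%N := leq_mul hk hk.
  have h0 : (4 * (a * b) <= (a + b) ^ 2)%N by exact: leq_of_leqif (nat_AGM2 a b).
  rewrite mulnC; apply: (leq_trans h0); rewrite !expnS expn0 !muln1; exact: h1.
have hb2 := B2 R n E hE S (hcorank E) (hrank E ^ 2 %/ 4) hcr hF.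
have F0 : (0 < hrank E ^ 2 %/ 4)%N by rewrite divn_gt0 //; nia.
have ec : ((hcorank E).-1)%:R = (hcorank E)%:R - 1 :> R.
  by rewrite -[in RHS](prednK (ltnW cr2)) -natr1 addrK.
rewrite ec in hb2.
set Q := Qv R n E S in hub hlb hb1 hb2.
set X := #|S|%:R * #|~: S|%:R / n%:R in hub hlb.
have e1 : s`_(n.-1) * #|S|%:R * #|~: S|%:R / n%:R = s`_(n.-1) * X by rewrite /X !mulrA.
have e2 : s`_1 * #|S|%:R * #|~: S|%:R / n%:R = s`_1 * X by rewrite /X !mulrA.
rewrite e1 e2.
have hr1 : (1 : R) <= (hrank E)%:R - 1.
  have : (2 : R) <= (hrank E)%:R by rewrite ler_nat.
  lra.
have hc0 : (0 : R) <= (hcorank E)%:R - 1.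
  have : (2 : R) <= (hcorank E)%:R by rewrite ler_nat.
  lra.
set B := (#|hboundary E S|%:R : R) in hb1 hb2 *.
split.
  apply: (le_trans hb1); apply: (le_trans hub); apply: ler_peMl => //.
  by apply: (le_trans _ hub); apply: (le_trans _ hb1); rewrite ler0n.
rewrite mulrAC ler_pdivrMr ?ltr0n //.
apply: (le_trans _ hb2); rewrite mulrC; apply: ler_wpM2r => //.
Qed.
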